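(* Let $\mathcal{A}^{(+)}$ be the graded unital associative $\mathbb{C}$-algebra generated by $\nabla_0,\nabla_1,\nabla_2,\nabla_3$ in degree $1$ with relations $[\nabla_0,\nabla_k]=[\nabla_\ell,\nabla_m]$ for every cyclic permutation $(k,\ell,m)$ of $(1,2,3)$. Then $\mathcal{A}^{(+)}$ has exponential growth and is not Gorenstein.
   Context: $\mathcal{A}^{(+)}$ is a quadratic algebra $T(E)/(R)$ with $E=\bigoplus_\lambda\mathbb{C}\nabla_\lambda$; its quadratic dual is $\mathcal{A}^{(+)!}=T(E^* )/(R^\perp)$. Its Koszul complex is the complex of free left modules $\mathcal{A}^{(+)}\otimes(\mathcal{A}^{(+)!}_n)^*$ with differential induced by $a\otimes(e_0\otimes\cdots\otimes e_n)\mapsto ae_0\otimes(e_1\otimes\cdots\otimes e_n)$. If this complex has finite length $D$, $\mathcal{A}^{(+)}$ is called Gorenstein if the cochain complex of right modules obtained by applying $\mathrm{Hom}_{\mathcal{A}^{(+)}}(-,\mathcal{A}^{(+)})$ termwise has cohomology $0$ in degrees $<D$ and isomorphic to the trivial right module $\mathbb{C}$ in degree $D$. Exponential growth means $\dim\mathcal{A}^{(+)}_n$ grows exponentially in $n$. *)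

(* Defs.v *)
(* Quadratic algebras T(E)/(R), E = K^m with basis
   nabla_0..nabla_{m-1}, encoded degree-wise by finite linear algebra. *)
From HB Require Import structures.
From mathcomp Require Import all_boot all_order all_algebra.
From mathcomp Require Import complex Rstruct.
Set Implicit Arguments. Unset Strict Implicit. Unset Printing Implicit Defensive.
Import Order.TTheory GRing.Theory Num.Theory.
Local Open Scope ring_scope.

Definition CC : fieldType := complex Rdefinitions.R.

Section QuadraticAlgebra.
Variables (K : fieldType) (m : nat).

(* words of length n in the generators; the tensor power E^{(x) n} has
   basis the words, so it is the space of K-valued functions on words. *)
Definition word n := n.-tuple 'I_m.
Definition tens n := {ffun word n -> K^o}.

Definition ev n (w : word n) : tens n := [ffun u => (u == w)%:R].

Definition coef2 (r : tens 2) (s : seq 'I_m) : K :=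
  if insub s is Some t then r t else 0.

(* u (x) r (x) v, where u is a word of length i, v the rest of the context *)
Definition relvec n (i : nat) (c : seq 'I_m) (r : tens 2) : tens n :=
  [ffun w : word n => ((take i w ++ drop i.+2 w) == c)%:R *
                      coef2 r (take 2 (drop i w))].

Variable R : {vspace tens 2}.

(* E^{(x) i} (x) R (x) E^{(x) (n-2-i)} inside E^{(x) n}, for i + 2 <= n *)
Definition Rat n (i : nat) : {vspace tens n} :=
  <<[seq relvec n i (take i w ++ drop i.+2 w) r
       | w : word n <- enum (predT : pred (word n)), r <- (vbasis R : seq (tens 2))]>>%VS.

(* degree-n component of the two-sided ideal (R) *)
Definition Ideal n : {vspace tens n} := (\sum_(i < n.-1) Rat n i)%VS.

Definition dimA n : nat := (\dim (fullv : {vspace tens n}) - \dim (Ideal n))%N.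

(* (A^!_n)^* = intersection of the E^i (x) R (x) E^(n-2-i) (= E^{(x)n} for n<=1) *)
Definition Wsp n : {vspace tens n} := (\bigcap_(i < n.-1) Rat n i)%VS.

Definition lmul j (a : 'I_m) (y : tens j) : tens j.+1 :=
  \sum_(u : word j) y u *: ev [tuple of a :: u].
Definition rmul j (b : 'I_m) (y : tens j) : tens j.+1 :=
  \sum_(u : word j) y u *: ev [tuple of rcons u b].
Definition slice n (a : 'I_m) (x : tens n.+1) : tens n :=
  [ffun w : word n => x [tuple of a :: w]].

(* Cochains C^n_j = Hom_A(A (x) W_n, A)_j = Hom_K(W_n, A_j), represented as
   Hom_K(E^{(x)n}, E^{(x)j}) modulo N n j = {phi | phi(W_n) <= (R)_j}. *)
Notation Hm n j := 'Hom(tens n, tens j).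

Definition qmap n j : 'Hom(Hm n j, Hm n j) :=
  linfun (fun phi : Hm n j =>
    ((\1 - projv (Ideal j)) \o phi \o projv (Wsp n))%VF).

Definition Nsp n j : {vspace Hm n j} := lker (qmap n j).

(* Hom of the Koszul differential a (x) (e_0 (x) ... (x) e_n) |-> a e_0 (x) (e_1 ...):
   (d phi)(x) = sum_a nabla_a phi(x_a) *)
Definition dK n j (phi : Hm n j) : Hm n.+1 j.+1 :=
  linfun (fun x : tens n.+1 => \sum_(a : 'I_m) lmul a (phi (slice a x))).

(* right A-module action of nabla_b on cochains: (phi . nabla_b)(x) = phi(x) nabla_b *)
Definition ract n j (b : 'I_m) (phi : Hm n j) : Hm n j.+1 :=
  (linfun (@rmul j b) \o phi)%VF.

(* cocycles (lifted to Hm n j) *)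
Definition Zsp n j : {vspace Hm n j} :=
  lker (qmap n.+1 j.+1 \o linfun (@dK n j))%VF.

(* coboundaries (lifted, containing Nsp) *)
Definition Bsp n j : {vspace Hm n j} :=
  match n, j return {vspace Hm n j} with
  | n'.+1, j'.+1 => (limg (linfun (@dK n' j')) + Nsp n'.+1 j'.+1)%VS
  | n', j' => Nsp n' j'
  end.

(* dim_K of the internal-degree-j part of H^n(Hom_A(K(A), A)) *)
Definition cohdim n j : nat := (\dim (Zsp n j) - \dim (Bsp n j))%N.

Definition koszul_length (D : nat) : Prop :=
  Wsp D != 0%VS /\ forall n, (D < n)%N -> Wsp n = 0%VS.

(* H^D is isomorphic to the trivial right module K: it is one-dimensional over K
   (H^D = (+)_j H^D_j) and every generator nabla_b acts by zero. *)
Definition coh_trivial_module (D : nat) : Prop :=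
  (exists j0, cohdim D j0 = 1%N /\ forall j, j != j0 -> cohdim D j = 0%N) /\
  (forall (b : 'I_m) j (phi : Hm D j), phi \in Zsp D j -> ract b phi \in Bsp D j.+1).

Definition Gorenstein : Prop :=
  exists D, koszul_length D /\
    (forall n j, (n < D)%N -> cohdim n j = 0%N) /\
    coh_trivial_module D.

End QuadraticAlgebra.

Definition exponential_growth (d : nat -> nat) : Prop :=
  exists c : rat, 1 < c /\ exists N : nat, forall n, (N <= n)%N -> c ^+ n <= (d n)%:R.

Definition nab (i : nat) : 'I_4 := inord i.
Definition mon2 (a b : nat) : tens CC 4 2 := @ev CC 4 2 [tuple nab a; nab b].
Definition comm_rel (k l m : nat) : tens CC 4 2 :=
  mon2 0 k - mon2 k 0 - (mon2 l m - mon2 m l).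
Definition Rplus : {vspace tens CC 4 2} :=
  <<[:: comm_rel 1 2 3; comm_rel 2 3 1; comm_rel 3 1 2]>>%VS.

(* Main.v *)
Require Import Defs.
From HB Require Import structures.
From mathcomp Require Import all_boot all_order all_algebra.
From mathcomp Require Import complex Rstruct ring zify.
Set Implicit Arguments. Unset Strict Implicit. Unset Printing Implicit Defensive.
Import Order.TTheory GRing.Theory Num.Theory.
Local Open Scope ring_scope.

Lemma linfunE' (aT rT : vectType CC) (f : aT -> rT) : linear f -> forall x, linfun f x = f x.
Proof.
move=> lf x; pose L := GRing.isLinear.Build _ _ _ _ f lf.
pose fL : {linear _ -> _} := HB.pack f L; exact: (lfunE fL).
Qed.

Lemma span_ind (vT : vectType CC) (s : seq vT) (P : vT -> Prop) :
  P 0 -> (forall x y, P x -> P y -> P (x + y)) -> (forall k x, P x -> P (k *: x)) ->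
  (forall v, v \in s -> P v) -> forall x, x \in <<s>>%VS -> P x.
Proof.
move=> P0 PD PZ Ps x /(@coord_span _ _ _ (in_tuple s)) ->.
elim/big_ind: _ => // i _; apply: PZ; apply: Ps; apply: mem_nth; exact: (ltn_ord i).
Qed.

Definition o0 : 'I_4 := @Ordinal 4 0 isT.
Definition o1 : 'I_4 := @Ordinal 4 1 isT.
Definition o2 : 'I_4 := @Ordinal 4 2 isT.
Definition o3 : 'I_4 := @Ordinal 4 3 isT.
Lemma nab0 : nab 0 = o0. Proof. by apply: val_inj; rewrite /= inordK. Qed.
Lemma nab1 : nab 1 = o1. Proof. by apply: val_inj; rewrite /= inordK. Qed.
Lemma nab2 : nab 2 = o2. Proof. by apply: val_inj; rewrite /= inordK. Qed.
Lemma nab3 : nab 3 = o3. Proof. by apply: val_inj; rewrite /= inordK. Qed.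
Lemma mon2E a b (t : word 4 2) : mon2 a b t = (t == [tuple nab a; nab b])%:R.
Proof. by rewrite ffunE. Qed.
Lemma crE k l m t : comm_rel k l m t = mon2 0 k t - mon2 k 0 t - (mon2 l m t - mon2 m l t).
Proof. by rewrite !ffunE. Qed.

Lemma I4cases (a : 'I_4) : [\/ a = o0, a = o1, a = o2 | a = o3].
Proof.
case: a => [[|[|[|[|k]]]] Hk].
- by apply: Or41; apply: val_inj.
- by apply: Or42; apply: val_inj.
- by apply: Or43; apply: val_inj.
- by apply: Or44; apply: val_inj.
- by [].
Qed.

Definition I : CC := Complex 0 1.
Lemma II : I * I = -1.
Proof. have := @sqr_i Rdefinitions.R. rewrite expr2. done. Qed.

Lemma tD m n (f g : tens CC m n) w : (f + g) w = f w + g w.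
Proof. by rewrite ffunE. Qed.
Lemma tN m n (f : tens CC m n) w : (- f) w = - f w.
Proof. by rewrite ffunE. Qed.
Lemma tZ m n (k : CC) (f : tens CC m n) w : (k *: f) w = k * f w.
Proof. by rewrite ffunE. Qed.
Lemma t0 m n w : (0 : tens CC m n) w = 0.
Proof. by rewrite ffunE. Qed.

Lemma memR3 (v1 v2 v3 r : tens CC 4 2) : r \in <<[:: v1; v2; v3]>>%VS ->
  exists a b c, forall t, r t = a * v1 t + b * v2 t + c * v3 t.
Proof.
move: r; apply: (@span_ind _ [:: v1; v2; v3] (fun r => exists a b c, forall t, r t = a * v1 t + b * v2 t + c * v3 t)).
- exists 0, 0, 0 => t. rewrite t0. ring.
- move=> x y [a [b [c Hx]]] [a' [b' [c' Hy]]]; exists (a + a'), (b + b'), (c + c') => t.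
  rewrite tD Hx Hy; ring.
- move=> k x [a [b [c Hx]]]; exists (k * a), (k * b), (k * c) => t.
  rewrite tZ Hx; ring.
- move=> v; rewrite !inE => /or3P [] /eqP -> .
  + by exists 1, 0, 0 => t; ring.
  + by exists 0, 1, 0 => t; ring.
  + by exists 0, 0, 1 => t; ring.
Qed.

Lemma diag3 (v1 v2 v3 r : tens CC 4 2) t : r \in <<[:: v1; v2; v3]>>%VS ->
  v1 t = 0 -> v2 t = 0 -> v3 t = 0 -> r t = 0.
Proof. by move=> /memR3 [a [b [c ->]]] -> -> ->; ring. Qed.

Lemma kill3 (v1 v2 v3 r : tens CC 4 2) t1 t2 t3 : r \in <<[:: v1; v2; v3]>>%VS ->
  v2 t1 = 0 -> v3 t1 = 0 -> v1 t2 = 0 -> v3 t2 = 0 -> v1 t3 = 0 -> v2 t3 = 0 ->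
  v1 t1 != 0 -> v2 t2 != 0 -> v3 t3 != 0 ->
  r t1 = 0 -> r t2 = 0 -> r t3 = 0 -> r = 0.
Proof.
move=> /memR3 [a [b [c Hr]]] e21 e31 e12 e32 e13 e23 n1 n2 n3.
rewrite !Hr e21 e31 e12 e32 e13 e23 !mulr0 !addr0 !add0r.
move=> /eqP; rewrite mulf_eq0 (negbTE n1) orbF => /eqP a0.
move=> /eqP; rewrite mulf_eq0 (negbTE n2) orbF => /eqP b0.
move=> /eqP; rewrite mulf_eq0 (negbTE n3) orbF => /eqP c0.
by apply/ffunP => t; rewrite Hr a0 b0 c0 t0 !mul0r !addr0.
Qed.

Ltac cval := rewrite crE !mon2E !nab0 !nab1 !nab2 !nab3 /= ?mulr0n ?mulr1n
   ?subr0 ?sub0r ?opprK ?oppr0 ?subrr ?oppr_eq0 ?oner_eq0 //.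

Notation c1 := (comm_rel 1 2 3).
Notation c2 := (comm_rel 2 3 1).
Notation c3 := (comm_rel 3 1 2).

Lemma R_diag r (a : 'I_4) : r \in Rplus -> r [tuple a; a] = 0.
Proof. by move=> Hr; case: (I4cases a) => ->; apply: (diag3 Hr); cval. Qed.

Lemma R_kill r (a : 'I_4) : r \in Rplus -> (forall c, r [tuple a; c] = 0) -> r = 0.
Proof.
move=> Hr H; case: (I4cases a) => Ea; subst a.
- by apply: (kill3 (t1 := [tuple o0; o1]) (t2 := [tuple o0; o2]) (t3 := [tuple o0; o3]) Hr); try cval; apply: H.
- by apply: (kill3 (t1 := [tuple o1; o0]) (t2 := [tuple o1; o3]) (t3 := [tuple o1; o2]) Hr); try cval; apply: H.
- by apply: (kill3 (t1 := [tuple o2; o3]) (t2 := [tuple o2; o0]) (t3 := [tuple o2; o1]) Hr); try cval; apply: H.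
- by apply: (kill3 (t1 := [tuple o3; o2]) (t2 := [tuple o3; o1]) (t3 := [tuple o3; o0]) Hr); try cval; apply: H.
Qed.

Lemma coef2_t (r : tens CC 4 2) (t : word 4 2) : coef2 r t = r t.
Proof. by rewrite /coef2 valK. Qed.
Lemma coef2_2 (r : tens CC 4 2) p q : coef2 r [:: p; q] = r [tuple p; q].
Proof. exact: (coef2_t r [tuple p; q]). Qed.

Definition sl (a : 'I_4) (x : tens CC 4 3) : tens CC 4 2 := [ffun t : word 4 2 => x [tuple of a :: t]].

Lemma G1 x : x \in Defs.Rat Rplus 3 0 -> forall a c, x [tuple of a :: [tuple a; c]] = 0.
Proof.
move: x; apply: (@span_ind _ _ (fun x : tens CC 4 3 => forall a c, x [tuple of a :: [tuple a; c]] = 0)).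
- by move=> a c; rewrite t0.
- by move=> x y Hx Hy a c; rewrite tD Hx Hy addr0.
- by move=> k x Hx a c; rewrite tZ Hx mulr0.
- move=> v /allpairsP [[w r] [_ /= rB ->]] a c.
  by rewrite ffunE /= coef2_2 R_diag ?mulr0 // (vbasis_mem rB).
Qed.

Lemma G2 x : x \in Defs.Rat Rplus 3 1 -> forall a, sl a x \in Rplus.
Proof.
move: x; apply: (@span_ind _ _ (fun x : tens CC 4 3 => forall a, sl a x \in Rplus)).
- move=> a; have -> : sl a 0 = 0 by apply/ffunP => t; rewrite !ffunE.
  exact: mem0v.
- move=> x y Hx Hy a; have -> : sl a (x + y) = sl a x + sl a y.
    by apply/ffunP => t; rewrite !ffunE.
  exact: memvD.
- move=> k x Hx a; have -> : sl a (k *: x) = k *: sl a x.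
    by apply/ffunP => t; rewrite !ffunE.
  exact: memvZ.
- move=> v /allpairsP [[w r] [_ /= rB ->]] a.
  have -> : sl a (relvec 3 1 (take 1 w ++ drop 3 w) r) = ([:: a] == take 1 w ++ drop 3 w)%:R *: r.
    apply/ffunP => t; rewrite !ffunE /= take0 (drop_oversize (n := 2)) ?size_tuple //.
    rewrite (take_oversize (n := 2)) ?size_tuple // drop0 coef2_t. done.
  by apply: memvZ; apply: vbasis_mem.
Qed.

Lemma W3zero : Wsp Rplus 3 = 0%VS.
Proof.
apply/eqP; rewrite -subv0; apply/subvP => x Hx; rewrite memv0; apply/eqP.
have S0 : (Wsp Rplus 3 <= Defs.Rat Rplus 3 0)%VS by apply: (bigcapv_inf ord0).
have S1 : (Wsp Rplus 3 <= Defs.Rat Rplus 3 1)%VS by apply: (bigcapv_inf (@Ordinal 2 1 isT)).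
have H0 := G1 (subvP S0 _ Hx).
have H1 := G2 (subvP S1 _ Hx).
have K a : sl a x = 0.
  apply: (R_kill (a := a) (H1 a)) => c; rewrite ffunE; exact: H0.
apply/ffunP => w; rewrite t0 (tuple_eta w).
by have := congr1 (fun f : tens CC 4 2 => f [tuple of behead w]) (K (thead w)); rewrite ffunE t0.
Qed.

Lemma qmapE n j phi : qmap Rplus n j phi =
  ((\1 - projv (Ideal Rplus j)) \o phi \o projv (Wsp Rplus n))%VF.
Proof.
rewrite /qmap linfunE' // => k x y.
by rewrite comp_lfunDr comp_lfunDl -comp_lfunZr -comp_lfunZl.
Qed.

Lemma projv0 (vT : vectType CC) (u : vT) : projv (0%VS : {vspace vT}) u = 0.
Proof. by have := memv_proj 0%VS u; rewrite memv0 => /eqP. Qed.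

Lemma Ideal0 : Ideal Rplus 0 = 0%VS.
Proof. by rewrite /Ideal big_ord0. Qed.

Lemma Wsp1 : Wsp Rplus 1 = fullv.
Proof. by rewrite /Wsp big_ord0. Qed.

Lemma Wsp2 : Wsp Rplus 2 = Defs.Rat Rplus 2 0.
Proof. by rewrite /Wsp big_ord1. Qed.

Lemma R_W2 : (Rplus <= Wsp Rplus 2)%VS.
Proof.
rewrite Wsp2 -{1}(span_basis (vbasisP Rplus)); apply/span_subvP => b Hb.
apply: memv_span; apply/allpairsP; exists ([tuple o0; o0], b); split => //=.
  by rewrite mem_enum.
have E : relvec 2 0 [::] (b : tens CC 4 2) = b.
  apply/ffunP => t; rewrite ffunE take0 drop0 (drop_oversize (n := 2)) ?size_tuple //.
  by rewrite (take_oversize (n := 2)) ?size_tuple // coef2_t eqxx mul1r.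
by rewrite E.
Qed.

Lemma c1_in : c1 \in Wsp Rplus 2.
Proof. by apply: (subvP R_W2); apply: memv_span; rewrite !inE eqxx. Qed.
Lemma c2_in : c2 \in Wsp Rplus 2.
Proof. by apply: (subvP R_W2); apply: memv_span; rewrite !inE eqxx orbT. Qed.

Lemma e11 : c1 [tuple o0; o1] = 1. Proof. by cval. Qed.
Lemma e21 : c2 [tuple o0; o1] = 0. Proof. by cval. Qed.
Lemma e12 : c1 [tuple o0; o2] = 0. Proof. by cval. Qed.
Lemma e22 : c2 [tuple o0; o2] = 1. Proof. by cval. Qed.

Lemma c1_neq0 : c1 != 0.
Proof. by apply/eqP => h; have := e11; rewrite h t0 => /eqP; rewrite eq_sym oner_eq0. Qed.

Lemma dimT m n : \dim (fullv : {vspace tens CC m n}) = (m ^ n)%N.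
Proof.
rewrite dimvf; change (#|{: word m n}| * 1 = m ^ n)%N.
by rewrite card_tuple card_ord muln1.
Qed.

Lemma dimH20 : \dim (fullv : {vspace 'Hom(tens CC 4 2, tens CC 4 0)}) = 16%N.
Proof.
rewrite dimvf; change ((#|{: word 4 2}| * 1) * (#|{: word 4 0}| * 1) = 16)%N.
by rewrite !card_tuple card_ord.
Qed.

Definition psi (t : word 4 2) : 'Hom(tens CC 4 2, tens CC 4 0) :=
  linfun (fun x : tens CC 4 2 => [ffun _ : word 4 0 => x t] : tens CC 4 0).

Lemma psiE t x : psi t x = [ffun _ => x t].
Proof.
by rewrite /psi linfunE' // => k y z; apply/ffunP => u; rewrite !ffunE.
Qed.

Lemma vE t c : c \in Wsp Rplus 2 -> qmap Rplus 2 0 (psi t) c = [ffun _ => c t].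
Proof.
move=> Hc; rewrite qmapE !comp_lfunE projv_id // Ideal0 add_lfunE opp_lfunE id_lfunE.
by rewrite projv0 subr0 psiE.
Qed.

Lemma Zsp20 : Zsp Rplus 2 0 = fullv.
Proof.
apply/eqP; rewrite eqEsubv subvf /=; apply/subvP => phi _.
rewrite memv_ker comp_lfunE qmapE W3zero; apply/eqP/lfunP => u.
by rewrite !comp_lfunE projv0 !linear0 zero_lfunE.
Qed.

Lemma cohdim20 : (2 <= cohdim Rplus 2 0)%N.
Proof.
set f := qmap Rplus 2 0.
have Hk := limg_ker_dim f fullv; rewrite capfv dimH20 in Hk.
rewrite /cohdim Zsp20 dimH20 /Bsp /Nsp -/f.
set v1 := f (psi [tuple o0; o1]); set v2 := f (psi [tuple o0; o2]).
have fr : free [:: v1; v2].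
  rewrite free_cons seq1_free span_seq1; apply/andP; split.
    apply/vlineP => [[k hk]].
    have := congr1 (fun g : 'Hom(tens CC 4 2, tens CC 4 0) => g c1 [tuple]) hk.
    rewrite scale_lfunE /v1 /v2 !vE ?c1_in // => h.
    rewrite !ffunE !nab0 !nab1 !nab2 !nab3 /= ?mulr0n ?mulr1n ?subr0 ?sub0r ?subrr ?oppr0 in h.
    have : (1 : CC) = 0 by rewrite h; exact: mulr0.
    by move=> /eqP; rewrite oner_eq0.
  apply/eqP => h0.
  have := congr1 (fun g : 'Hom(tens CC 4 2, tens CC 4 0) => g c2 [tuple]) h0.
  rewrite zero_lfunE /v2 vE ?c2_in // t0 => h.
  rewrite !ffunE !nab0 !nab1 !nab2 !nab3 /= ?mulr0n ?mulr1n ?subr0 ?sub0r ?subrr ?oppr0 in h.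
  have : (1 : CC) = 0 by exact: h.
  by move=> /eqP; rewrite oner_eq0.
have d2 : \dim <<[:: v1; v2]>> = 2%N by apply/eqP.
have sub : (<<[:: v1; v2]>> <= limg f)%VS.
  apply/span_subvP => v; rewrite !inE => /orP [] /eqP ->; exact: memv_img (memvf _).
have := dimvS sub; rewrite d2 => H2.
have key : forall a b : nat, (a + b = 16 -> 2 <= b -> 2 <= 16 - a)%N by move=> a b; lia.
exact: (key _ _ Hk H2).
Qed.

Lemma notGor : ~ Gorenstein Rplus.
Proof.
move=> [D [[WD WgtD] [Hvan [[j0 [Hj0 Hoth]] _]]]].
have H20 := cohdim20.
case: D WD WgtD Hvan Hj0 Hoth => [|[|[|D]]] WD WgtD Hvan Hj0 Hoth.
- have := WgtD 1%N isT; rewrite Wsp1 => h.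
  by have := dimT 4 1; rewrite h dimv0.
- have := c1_in; rewrite (WgtD 2%N isT) memv0 => h.
  by move: c1_neq0; rewrite h.
- case: (eqVneq j0 0%N) => [e | ne].
    by rewrite e in Hj0; rewrite Hj0 in H20.
  by move: H20; rewrite Hoth // eq_sym.
- by move: H20; rewrite Hvan.
Qed.

Definition e2 (q : 'I_2) : 'I_4 := widen_ord (isT : (2 <= 4)%N) q.
Definition M (p : 'I_2) (a : 'I_4) : CC :=
  match nat_of_ord a with
  | 0 => (nat_of_ord p == 0)%:R
  | 1 => (nat_of_ord p == 1)%:R
  | 2 => (nat_of_ord p == 0)%:R * I
  | _ => - ((nat_of_ord p == 1)%:R * I)
  end.
Definition Wseq (s : seq 'I_2) (t : seq 'I_4) : CC := \prod_(pq <- zip s t) M pq.1 pq.2.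
Definition Phif n (x : tens CC 4 n) : tens CC 2 n :=
  [ffun u : word 2 n => \sum_(w : word 4 n) Wseq u w * x w].
Definition Phi n : 'Hom(tens CC 4 n, tens CC 2 n) := linfun (@Phif n).

Lemma PhiE n (x : tens CC 4 n) : Phi n x = Phif x.
Proof.
rewrite /Phi linfunE' // => k y z; apply/ffunP => u; rewrite !ffunE.
under eq_bigr => w _ do rewrite !ffunE.
under eq_bigr => w _ do rewrite mulrDr.
rewrite big_split /= scaler_sumr; congr (_ + _); apply: eq_bigr => w _.
by rewrite scalerAr.
Qed.

Lemma delta1 (T : finType) (a : T) (F : T -> CC) : \sum_(x : T) (x == a)%:R * F x = F a.
Proof.
rewrite (bigD1 a) //= eqxx mul1r big1 ?addr0 // => x /negbTE ->; by rewrite mul0r.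
Qed.
Lemma delta2 (T : finType) (a : T) (F : T -> CC) : \sum_(x : T) F x * (x == a)%:R = F a.
Proof.
rewrite (bigD1 a) //= eqxx mulr1 big1 ?addr0 // => x /negbTE ->; by rewrite mulr0.
Qed.

Definition q0 : 'I_2 := @Ordinal 2 0 isT.
Definition q1 : 'I_2 := @Ordinal 2 1 isT.
Lemma I2cases (p : 'I_2) : p = q0 \/ p = q1.
Proof.
case: p => [[|[|k]] Hk]; [left|right|by []]; exact: val_inj.
Qed.

Lemma Wseq2 p q a b : Wseq [:: p; q] [:: a; b] = M p a * M q b.
Proof. by rewrite /Wseq /= !big_cons big_nil mulr1. Qed.

Lemma S3 (F : word 4 2 -> CC) (v1 v2 v3 r : tens CC 4 2) : r \in <<[:: v1; v2; v3]>>%VS ->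
  \sum_t F t * v1 t = 0 -> \sum_t F t * v2 t = 0 -> \sum_t F t * v3 t = 0 ->
  \sum_t F t * r t = 0.
Proof.
move=> /memR3 [a [b [c Hr]]] h1 h2 h3.
under eq_bigr => t _ do rewrite Hr !mulrDr (mulrCA _ a) (mulrCA _ b) (mulrCA _ c).
by rewrite !big_split /= -!mulr_sumr h1 h2 h3 !mulr0 !addr0.
Qed.

Lemma Scr (F : word 4 2 -> CC) k l m :
  \sum_t F t * comm_rel k l m t =
  F [tuple nab 0; nab k] - F [tuple nab k; nab 0] - (F [tuple nab l; nab m] - F [tuple nab m; nab l]).
Proof.
under eq_bigr => t _ do rewrite crE !mon2E !mulrBr.
by rewrite !sumrB !delta2.
Qed.

Lemma K2 (r : tens CC 4 2) p q : r \in Rplus ->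
  \sum_(t : word 4 2) Wseq [:: p; q] t * r t = 0.
Proof.
move=> hr; apply: (S3 (F := fun t : word 4 2 => Wseq [:: p; q] t) hr); rewrite Scr !Wseq2;
  rewrite !nab0 !nab1 !nab2 !nab3 /M /=;
  case: (I2cases p) => ->; case: (I2cases q) => -> /=; rewrite ?mulr0n ?mulr1n; ring: II.
Qed.

Lemma dec3 (T : Type) (s : seq T) i : s = take i s ++ take 2 (drop i s) ++ drop i.+2 s.
Proof.
by rewrite -{1}(cat_take_drop i s) -{1}(cat_take_drop 2 (drop i s)) drop_drop add2n.
Qed.

Lemma Wseq_cat s1 s2 t1 t2 : size s1 = size t1 -> Wseq (s1 ++ s2) (t1 ++ t2) = Wseq s1 t1 * Wseq s2 t2.
Proof. by move=> h; rewrite /Wseq zip_cat // big_cat. Qed.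

Lemma Wseq_split (u : seq 'I_2) (w : seq 'I_4) i : size u = size w -> (i.+2 <= size w)%N ->
 Wseq u w = Wseq (take i u) (take i w) * Wseq (take 2 (drop i u)) (take 2 (drop i w)) *
            Wseq (drop i.+2 u) (drop i.+2 w).
Proof.
move=> su hi; rewrite {1}(dec3 u i) {1}(dec3 w i) !Wseq_cat ?mulrA //.
  by rewrite !size_take !size_drop su.
by rewrite !size_take su.
Qed.

Lemma BJ n i (c : seq 'I_4) (G : seq 'I_4 -> CC) : (i.+2 <= n)%N -> size c = (n - 2)%N ->
  \sum_(w : word 4 n) ((take i w ++ drop i.+2 w) == c)%:R * G (take 2 (drop i w)) =
  \sum_(t : word 4 2) G t.
Proof.
move=> hi hc.
have ic : (i <= size c)%N by rewrite hc; lia.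
pose w0 : word 4 n := nseq_tuple n o0.
pose mk (t : word 4 2) : word 4 n := insubd w0 (take i c ++ t ++ drop i c).
have val_mk t : val (mk t) = take i c ++ t ++ drop i c.
  rewrite val_insubd !size_cat size_takel // size_drop size_tuple.
  by have -> : (i + (2 + (size c - i)) == n)%N by apply/eqP; rewrite hc; lia.
have ctx_mk t : take i (mk t) ++ drop i.+2 (mk t) = c.
  rewrite val_mk take_size_cat ?size_takel // catA drop_size_cat ?cat_take_drop //.
  by rewrite size_cat size_takel // size_tuple addn2.
have mid_mk t : take 2 (drop i (mk t)) = t.
  by rewrite val_mk drop_size_cat ?size_takel // take_size_cat ?size_tuple.
have mk_inj t t' : mk t = mk t' -> t = t'.
  by move=> h; apply: val_inj; have := congr1 (fun s : word 4 n => take 2 (drop i s)) h; rewrite !mid_mk.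
transitivity (\sum_(w : word 4 n) \sum_(t : word 4 2) (w == mk t)%:R * G t).
  apply: eq_bigr => w _.
  case: eqP => [Hc | Hn].
  - have s2 : size (take 2 (drop i w)) == 2%N.
      by rewrite size_takel // size_drop size_tuple; lia.
    pose t0 : word 4 2 := insubd [tuple o0; o0] (take 2 (drop i w)).
    have vt0 : val t0 = take 2 (drop i w) by rewrite val_insubd s2.
    have wE : w = mk t0.
      apply: val_inj; rewrite val_mk vt0 -Hc take_size_cat ?size_takel ?size_tuple //; last lia.
      rewrite drop_size_cat ?size_takel ?size_tuple //; last lia.
      exact: dec3.
    rewrite (bigD1 t0) //= -wE eqxx /= mulr1n.
    have -> : \sum_(t | t != t0) (w == mk t)%:R * G t = 0.
      apply: big1 => t ht.
      have -> : (w == mk t) = false.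
        by apply/negbTE; apply/eqP => h; move/eqP: ht; apply; apply: mk_inj; rewrite -wE.
      by rewrite mul0r.
    rewrite addr0 vt0; reflexivity.
  - rewrite mul0r big1 // => t _.
    have -> : (w == mk t) = false.
      by apply/negbTE; apply/eqP => h; apply: Hn; rewrite h ctx_mk.
    by rewrite mul0r.
rewrite exchange_big; apply: eq_bigr => t _.
exact: (delta1 (mk t) (fun _ => G t)).
Qed.

Lemma Phi_rel n i (w0 : word 4 n) (r : tens CC 4 2) : (i.+2 <= n)%N -> r \in Rplus ->
  Phif (relvec n i (take i w0 ++ drop i.+2 w0) r) = 0.
Proof.
move=> hi hr; apply/ffunP => u; rewrite !ffunE.
set c := take i w0 ++ drop i.+2 w0.
have sc : size c = (n - 2)%N.
  by rewrite size_cat size_takel ?size_drop ?size_tuple //; lia.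
set C := Wseq (take i u) (take i c) * Wseq (drop i.+2 u) (drop i c).
transitivity (C * \sum_(w : word 4 n) ((take i w ++ drop i.+2 w) == c)%:R *
   (Wseq (take 2 (drop i u)) (take 2 (drop i w)) * coef2 r (take 2 (drop i w)))).
  rewrite mulr_sumr; apply: eq_bigr => w _; rewrite ffunE.
  case: eqP => [Hc|_]; last by rewrite /= !mulr0n !mul0r !mulr0.
  have e1 : take i w = take i c by rewrite -Hc take_size_cat ?size_takel ?size_tuple //; lia.
  have e2 : drop i.+2 w = drop i c by rewrite -Hc drop_size_cat ?size_takel ?size_tuple //; lia.
  rewrite (@Wseq_split u w i) ?size_tuple // e1 e2 /C.
  move: (Wseq (take i u) _) (Wseq (take 2 _) _) (Wseq (drop _ u) _) (coef2 r _) => a b d e.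
  ring.
rewrite (@BJ n i c (fun s => Wseq (take 2 (drop i u)) s * coef2 r s)) //.
under eq_bigr => t _ do rewrite coef2_t.
have : size (take 2 (drop i u)) = 2%N by rewrite size_takel // size_drop size_tuple; lia.
case: (take 2 (drop i u)) => [|p [|q [|? ?]]] //= _.
by rewrite K2 // mulr0.
Qed.

Lemma dimT' m n : \dim (fullv : {vspace tens CC m n}) = (m ^ n)%N.
Proof.
rewrite dimvf; change (#|{: word m n}| * 1 = m ^ n)%N.
by rewrite card_tuple card_ord muln1.
Qed.

Lemma Ideal_ker n : (Ideal Rplus n <= lker (Phi n))%VS.
Proof.
rewrite /Ideal; apply/subv_sumP => i _; rewrite /Defs.Rat.
apply/span_subvP => v /allpairsP [[w r] [_ /= rB ->]].
rewrite memv_ker PhiE Phi_rel ?(vbasis_mem rB) //.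
by have := ltn_ord i; lia.
Qed.

Lemma M_e2 p q : M p (e2 q) = (p == q)%:R.
Proof.
by case: (I2cases p) => ->; case: (I2cases q) => ->; rewrite /M /=.
Qed.

Lemma Wseq_e2 (s t : seq 'I_2) : size s = size t -> Wseq s (map e2 t) = (s == t)%:R.
Proof.
elim: s t => [|x s IH] [|y t] //=; first by rewrite /Wseq big_nil.
move=> [hs]; rewrite /Wseq /= big_cons.
have := IH t hs; rewrite /Wseq => ->; rewrite M_e2 eqseq_cons.
by case: (x == y); rewrite /= ?mul1r ?mul0r ?mulr1n ?mulr0n ?mul1r ?mul0r.
Qed.

Definition emb n (u : word 2 n) : word 4 n := [tuple of map e2 u].

Lemma Phi_ev n (u : word 2 n) : Phi n (@ev CC 4 n (emb u)) = @ev CC 2 n u.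
Proof.
apply/ffunP => v; rewrite PhiE !ffunE.
under eq_bigr => w _ do rewrite ffunE.
rewrite delta2 /emb /= Wseq_e2 ?size_tuple //.
Qed.

Lemma limgPhi n : limg (Phi n) = fullv.
Proof.
apply/eqP; rewrite eqEsubv subvf /=; apply/subvP => y _.
have -> : y = Phi n (\sum_(u : word 2 n) y u *: @ev CC 4 n (emb u)).
  rewrite linear_sum; apply/ffunP => v; rewrite sum_ffunE.
  under eq_bigr => u _ do rewrite linearZZ /= Phi_ev /= !ffunE.
  rewrite (bigD1 v) //= eqxx big1 ?addr0.
    by rewrite /= mulr1n; exact: (esym (mulr1 _)).
  by move=> u /negbTE; rewrite eq_sym => ->; rewrite /= mulr0n scaler0.
exact: memv_img (memvf _).
Qed.

Lemma dimIdeal n : (\dim (Ideal Rplus n) <= 4 ^ n - 2 ^ n)%N.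
Proof.
have Hk := limg_ker_dim (Phi n) fullv; rewrite capfv limgPhi !dimT' in Hk.
have H := dimvS (Ideal_ker n).
have key : forall a b : nat, (a + 2 ^ n = 4 ^ n -> b <= a -> b <= 4 ^ n - 2 ^ n)%N.
  by move=> a b; lia.
exact: (key _ _ Hk H).
Qed.

Lemma dimA_ge n : (2 ^ n <= dimA Rplus n)%N.
Proof.
rewrite /dimA dimT'.
have h24 : (2 ^ n <= 4 ^ n)%N by case: n => [|k] //; rewrite leq_exp2r.
have := dimIdeal n; lia.
Qed.

Lemma expg : exponential_growth (dimA Rplus).
Proof.
exists 2; split => //; exists 0%N => n _.
by rewrite -natrX ler_nat dimA_ge.
Qed.


Theorem mainTheorem8 :
  exponential_growth (dimA Rplus) /\ ~ Gorenstein Rplus.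
Proof. split; [exact: expg | exact: notGor]. Qed.
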